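(* Let $\nu\ge 0$ and $K>\nu+1$, and let $\Psi_\nu(x)=I_{\nu+1}(x)/I_\nu(x)$ for $x>0$. Then the equation $$r-\Psi_\nu(2Kr)=0$$ has a positive real solution $r$.
   Context: $I_\nu$ denotes the modified Bessel function of the first kind of order $\nu$. *)

(* Defs.v *)
From Stdlib Require Import Reals Arith Factorial.
From Coquelicot Require Import Coquelicot.
Open Scope R_scope.

Definition Gamma (s : R) : R :=
  RInt_gen (fun t => Rpower t (s - 1) * exp (- t)) (at_right 0) (Rbar_locally p_infty).

Definition BesselI (nu x : R) : R :=
  Series (fun k : nat => Rpower (x / 2) (2 * INR k + nu) / (INR (fact k) * Gamma (INR k + nu + 1))).

Definition Psi (nu x : R) : R := BesselI (nu + 1) x / BesselI nu x.

(* Main.v *)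
Require Import Defs.
From Stdlib Require Import Reals Arith Factorial Lra Psatz Classical.
From Coquelicot Require Import Coquelicot.
Open Scope R_scope.


Definition gf (s t : R) := Rpower t (s - 1) * exp (- t).

Lemma gf_cont s t : 0 < t -> continuous (gf s) t.
Proof. intros Ht. apply (ex_derive_continuous (K:=R_AbsRing) (V:=R_NormedModule)). unfold gf, Rpower. auto_derive. lra. Qed.

Lemma gf_pos s t : 0 < gf s t.
Proof. unfold gf, Rpower. apply Rmult_lt_0_compat; apply exp_pos. Qed.

Lemma ball_R (x e y : R) : ball x e y <-> Rabs (y - x) < e.
Proof. reflexivity. Qed.

Lemma rpow_bound p t : 0 <= p -> 0 < t ->
  Rpower t p <= exp (p * ln (2*p+1)) * exp (t/2).
Proof.
intros Hp Ht. unfold Rpower. rewrite <- exp_plus.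
set (q := 2*p+1).
assert (Hq : 0 < q) by (unfold q; lra).
assert (ln t = ln (t/q) + ln q).
{ rewrite <- ln_mult. f_equal. field. lra. apply Rdiv_lt_0_compat; lra. lra. }
assert (H1 := exp_ineq1_le (ln (t/q))). rewrite exp_ln in H1 by (apply Rdiv_lt_0_compat; lra).
assert (p * (t/q) <= t/2).
{ unfold Rdiv. apply Rmult_le_reg_r with q; [lra|].
  replace (p * (t * / q) * q) with (p*t) by (field; lra).
  unfold q. nra. }
assert (H2 : p * ln t <= p * ln q + t / 2).
{ rewrite H. assert (p * ln (t/q) <= p * (t/q - 1)) by (apply Rmult_le_compat_l; lra). nra. }
destruct H2 as [H2|H2]; [left; apply exp_increasing; exact H2 | right; rewrite H2; reflexivity].
Qed.

Definition Cs (s : R) := exp ((s-1) * ln (2*(s-1)+1)).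

Lemma gf_bound s t : 1 <= s -> 0 < t -> gf s t <= Cs s * exp (- t / 2).
Proof.
intros Hs Ht. unfold gf, Cs.
assert (H := rpow_bound (s-1) t ltac:(lra) Ht).
replace (exp (-t/2)) with (exp (t/2) * exp (-t)) by (rewrite <- exp_plus; f_equal; lra).
rewrite <- Rmult_assoc. apply Rmult_le_compat_r; [left; apply exp_pos| exact H].
Qed.

Lemma int_bound s a b : 1 <= s -> 0 < a -> a <= b -> RInt (gf s) a b <= 2 * Cs s.
Proof.
intros Hs Ha Hab.
assert (HC : 0 < Cs s) by apply exp_pos.
set (F := fun t => - 2 * Cs s * exp (- t / 2)).
assert (HI : is_RInt (fun t => Cs s * exp (- t / 2)) a b (minus (F b) (F a))).
{ apply (is_RInt_derive (V:=R_CompleteNormedModule)).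
  - intros x _. unfold F. auto_derive; [trivial|]. unfold Rdiv; field.
  - intros x _. apply (ex_derive_continuous (K:=R_AbsRing) (V:=R_NormedModule)). auto_derive. trivial. }
apply Rle_trans with (RInt (fun t => Cs s * exp (- t / 2)) a b).
- apply RInt_le; auto.
  + apply (ex_RInt_continuous (V:=R_CompleteNormedModule)). intros z Hz. apply gf_cont.
    rewrite Rmin_left in Hz by lra. lra.
  + eexists; exact HI.
  + intros x Hx. apply gf_bound; lra.
- rewrite (is_RInt_unique _ _ _ _ HI). unfold F, minus, plus, opp; simpl.
  assert (0 < exp (-b/2)) by apply exp_pos.
  assert (exp (-a/2) < 1) by (rewrite <- exp_0; apply exp_increasing; lra).
  nra.
Qed.

Lemma exists_int (f : R -> R) (M : R) :
 (forall t, 0 < t -> continuous f t) -> (forall t, 0 < t -> 0 <= f t) ->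
 (forall a b, 0 < a -> a <= b -> RInt f a b <= M) ->
 exists L, is_RInt_gen f (at_right 0) (Rbar_locally p_infty) L /\ RInt f 1 2 <= L.
Proof.
intros Hc Hp HM.
assert (Hex : forall a b, 0 < a -> 0 < b -> ex_RInt f a b).
{ intros a b Ha Hb. apply (ex_RInt_continuous (V:=R_CompleteNormedModule)).
  intros z Hz. apply Hc. assert (0 < Rmin a b) by (apply Rmin_glb_lt; lra). lra. }
set (E := fun v => exists a b, 0 < a /\ a <= b /\ v = RInt f a b).
assert (Hb : bound E) by (exists M; intros v (a & b & Ha & Hab & ->); auto).
assert (Hne : exists v, E v) by (exists (RInt f 1 2); exists 1, 2; repeat split; lra).
destruct (completeness E Hb Hne) as [L [HL1 HL2]].
exists L. split.
2: { apply HL1. exists 1, 2; repeat split; lra. }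
intros P [eps HP].
assert (Hab0 : exists a0 b0, 0 < a0 /\ a0 <= b0 /\ L - eps < RInt f a0 b0).
{ apply NNPP. intros Hn. assert (L <= L - eps).
  { apply HL2. intros v (a & b & Ha & Hab & ->). apply Rnot_lt_le. intros Hl.
    apply Hn. exists a, b. auto. }
  destruct eps; simpl in *; lra. }
destruct Hab0 as (a0 & b0 & Ha0 & Hab0 & Hlt).
apply (Filter_prod _ _ _ (fun a => 0 < a <= a0) (fun b => b0 <= b)).
- exists (mkposreal a0 Ha0). intros y Hy Hy0. rewrite ball_R in Hy. simpl in Hy.
  split; auto. apply Rabs_lt_between in Hy. lra.
- exists b0. intros; lra.
- intros a b [Ha Ha'] Hb'. simpl.
  exists (RInt f a b). split.
  + apply (RInt_correct (V:=R_CompleteNormedModule)). apply Hex; lra.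
  + apply HP. rewrite ball_R.
    assert (RInt f a b <= L) by (apply HL1; exists a, b; repeat split; lra).
    assert (RInt f a0 b0 <= RInt f a b).
    { rewrite <- (RInt_Chasles f a a0 b) by (apply Hex; lra).
      rewrite <- (RInt_Chasles f a0 b0 b) by (apply Hex; lra).
      assert (0 <= RInt f a a0) by (apply RInt_ge_0; [lra | apply Hex; lra| intros; apply Hp; lra]).
      assert (0 <= RInt f b0 b) by (apply RInt_ge_0; [lra | apply Hex; lra| intros; apply Hp; lra]).
      change plus with Rplus. lra. }
    apply Rabs_lt_between. lra.
Qed.

Lemma Gamma_spec s : 1 <= s ->
  is_RInt_gen (gf s) (at_right 0) (Rbar_locally p_infty) (Gamma s) /\ 0 < Gamma s.
Proof.
intros Hs.
destruct (exists_int (gf s) (2 * Cs s)) as (L & HL & HL2).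
- intros; apply gf_cont; auto.
- intros; left; apply gf_pos.
- intros; apply int_bound; auto.
- assert (HG : Gamma s = L).
  { unfold Gamma. apply (is_RInt_gen_unique (V:=R_CompleteNormedModule)). exact HL. }
  rewrite HG. split; auto.
  eapply Rlt_le_trans; [|exact HL2].
  apply RInt_gt_0; [lra| intros; apply gf_pos | intros; apply gf_cont; lra].
Qed.


Definition Fg (s t : R) := Rpower t s * exp (-t).

Lemma dF s x : 0 < x -> is_derive (Fg s) x (s * gf s x - gf (s+1) x).
Proof. intros Hx. unfold Fg, gf, Rpower. auto_derive. lra.
replace (s+1-1) with s by ring.
assert (E : exp((s-1)*ln x) = exp(s*ln x) * / x).
{ replace ((s-1)*ln x) with (s*ln x + - ln x) by ring. rewrite exp_plus, exp_Ropp, exp_ln; auto. }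
rewrite E. field. lra.
Qed.

Lemma exp_le1 x : x <= 0 -> exp x <= 1.
Proof. intros H. destruct H as [H|H]. left; rewrite <- exp_0; apply exp_increasing; auto. rewrite H, exp_0; lra. Qed.

Lemma fp_pos (P : R -> Prop) : (forall x, 0 < x -> P x) ->
  filter_prod (at_right 0) (Rbar_locally p_infty)
   (fun ab => forall x, Rmin (fst ab) (snd ab) <= x <= Rmax (fst ab) (snd ab) -> P x).
Proof.
intros HP. apply (Filter_prod _ _ _ (fun a => 0 < a) (fun b => 0 < b)).
- exists (mkposreal 1 Rlt_0_1). intros y _ Hy; exact Hy.
- exists 0. auto.
- intros a b Ha Hb x Hx. apply HP. simpl in Hx.
  assert (0 < Rmin a b) by (apply Rmin_glb_lt; lra). lra.
Qed.

Lemma fp_pos' (P : R -> Prop) : (forall x, 0 < x -> P x) ->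
  filter_prod (at_right 0) (Rbar_locally p_infty)
   (fun ab => forall x, Rmin (fst ab) (snd ab) < x < Rmax (fst ab) (snd ab) -> P x).
Proof.
intros HP. eapply filter_imp; [|apply (fp_pos P HP)].
intros [a b] H x Hx. apply H. lra.
Qed.

Lemma Fg_lim0 s : 1 <= s -> filterlim (Fg s) (at_right 0) (locally 0).
Proof.
intros Hs. apply filterlim_locally. intros eps.
assert (He := cond_pos eps).
exists (mkposreal (Rmin eps 1) ltac:(apply Rmin_glb_lt; lra)).
intros y Hy Hy0. rewrite ball_R in Hy |- *. simpl in Hy.
rewrite Rminus_0_r in Hy |- *. rewrite Rabs_right in Hy by lra.
assert (y < eps /\ y < 1) as [H1 H2].
{ split; eapply Rlt_le_trans; eauto; [apply Rmin_l | apply Rmin_r]. }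
unfold Fg.
assert (E : Rpower y s = y * Rpower y (s-1)).
{ replace s with (1 + (s-1)) at 1 by ring. rewrite Rpower_plus, Rpower_1; auto. }
rewrite E.
assert (Rpower y (s-1) <= 1).
{ unfold Rpower. apply exp_le1. assert (ln y < 0).
  { rewrite <- ln_1. apply ln_increasing; lra. }
  nra. }
assert (exp (-y) <= 1) by (apply exp_le1; lra).
assert (0 < Rpower y (s-1)) by apply exp_pos.
assert (0 < exp (-y)) by apply exp_pos.
rewrite Rabs_right by (apply Rle_ge; apply Rmult_le_pos; [apply Rmult_le_pos|]; lra).
assert (Rpower y (s-1) * exp (-y) <= 1) by nra.
rewrite Rmult_assoc. nra.
Qed.

Lemma Fg_liminf s : 1 <= s -> filterlim (Fg s) (Rbar_locally p_infty) (locally 0).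
Proof.
intros Hs. apply filterlim_locally. intros eps.
assert (He := cond_pos eps).
set (C := exp (s * ln (2*s+1))).
assert (HC : 0 < C) by apply exp_pos.
exists (Rmax 0 (-2 * ln (eps / C))). intros y Hy.
assert (Hy0 : 0 < y) by (eapply Rle_lt_trans; [apply Rmax_l| exact Hy]).
assert (Hy' : -2 * ln (eps / C) < y) by (eapply Rle_lt_trans; [apply Rmax_r| exact Hy]).
clear Hy.
rewrite ball_R, Rminus_0_r. unfold Fg.
assert (HB := rpow_bound s y ltac:(lra) Hy0). fold C in HB.
  assert (0 < Rpower y s) by apply exp_pos.
  assert (0 < exp (-y)) by apply exp_pos.
  rewrite Rabs_right by (apply Rle_ge; apply Rmult_le_pos; lra).
  apply Rle_lt_trans with (C * exp (- y / 2)).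
  + replace (exp (-y/2)) with (exp (y/2) * exp (-y)) by (rewrite <- exp_plus; f_equal; lra).
    rewrite <- Rmult_assoc. apply Rmult_le_compat_r; lra.
  + assert (exp (-y/2) < eps / C).
    { rewrite <- (exp_ln (eps / C)) by (apply Rdiv_lt_0_compat; lra).
      apply exp_increasing. lra. }
    apply Rmult_lt_compat_l with (r := C) in H1; auto.
    replace (C * (eps / C)) with (pos eps) in H1 by (field; lra). exact H1.
Qed.

Lemma Gamma_rec s : 1 <= s -> Gamma (s+1) = s * Gamma s.
Proof.
intros Hs.
destruct (Gamma_spec s Hs) as [H1 _].
destruct (Gamma_spec (s+1) ltac:(lra)) as [H2 _].
assert (HD : is_RInt_gen (Derive (Fg s)) (at_right 0) (Rbar_locally p_infty) (0 - 0)).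
{ apply is_RInt_gen_Derive.
  - apply fp_pos. intros x Hx. eexists; apply dF; auto.
  - apply fp_pos. intros x Hx. apply continuous_ext_loc with (fun t => s * gf s t - gf (s+1) t).
    + exists (mkposreal x Hx). intros y Hy. rewrite ball_R in Hy. apply Rabs_lt_between in Hy. simpl in Hy.
      symmetry. apply is_derive_unique. apply dF. lra.
    + apply (ex_derive_continuous (K:=R_AbsRing) (V:=R_NormedModule)). unfold gf, Rpower. auto_derive. lra.
  - apply Fg_lim0; auto.
  - apply Fg_liminf; auto. }
assert (HS := is_RInt_gen_scal (V:=R_NormedModule) (gf s) s (Gamma s) H1).
assert (HG := is_RInt_gen_minus (V:=R_NormedModule) _ (gf (s+1)) _ _ HS H2).
assert (HG' : is_RInt_gen (Derive (Fg s)) (at_right 0) (Rbar_locally p_infty) (minus (scal s (Gamma s)) (Gamma (s+1)))).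
{ eapply (is_RInt_gen_ext (V:=R_NormedModule)); [| exact HG]. apply fp_pos'. intros x Hx.
  rewrite (is_derive_unique _ _ _ (dF s x Hx)). unfold minus, plus, opp, scal; simpl. unfold mult; simpl. ring. }
assert (E := is_RInt_gen_unique (V:=R_CompleteNormedModule) _ _ HD).
rewrite (is_RInt_gen_unique (V:=R_CompleteNormedModule) _ _ HG') in E.
unfold minus, scal, plus, opp in E; simpl in E. unfold mult in E; simpl in E. lra.
Qed.


Definition c (nu : R) (k : nat) := / (INR (fact k) * Gamma (INR k + nu + 1)).

Lemma INR_fact_pos k : 0 < INR (fact k).
Proof. apply lt_0_INR. apply lt_O_fact. Qed.

Lemma Gamma_k_pos nu k : 0 <= nu -> 0 < Gamma (INR k + nu + 1).
Proof. intros H. apply Gamma_spec. assert (0 <= INR k) by apply pos_INR. lra. Qed.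

Lemma c_pos nu k : 0 <= nu -> 0 < c nu k.
Proof. intros H. unfold c. apply Rinv_0_lt_compat. apply Rmult_lt_0_compat; [apply INR_fact_pos|apply Gamma_k_pos; auto]. Qed.

Lemma c_S nu k : 0 <= nu -> c nu (S k) = c nu k / ((INR k + 1) * (INR k + nu + 1)).
Proof.
intros H. unfold c. rewrite fact_simpl, mult_INR, S_INR.
replace (INR k + 1 + nu + 1) with ((INR k + nu + 1) + 1) by ring.
rewrite Gamma_rec by (assert (0 <= INR k) by apply pos_INR; lra).
assert (0 < INR (fact k)) by apply INR_fact_pos.
assert (0 < Gamma (INR k + nu + 1)) by (apply Gamma_k_pos; auto).
assert (0 <= INR k) by apply pos_INR.
field. repeat split; lra.
Qed.

Lemma c_shift nu k : 0 <= nu -> c (nu+1) k = c nu k / (INR k + nu + 1).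
Proof.
intros H. unfold c.
replace (INR k + (nu + 1) + 1) with ((INR k + nu + 1) + 1) by ring.
rewrite Gamma_rec by (assert (0 <= INR k) by apply pos_INR; lra).
assert (0 < INR (fact k)) by apply INR_fact_pos.
assert (0 < Gamma (INR k + nu + 1)) by (apply Gamma_k_pos; auto).
assert (0 <= INR k) by apply pos_INR.
field. repeat split; lra.
Qed.

Lemma c_radius nu : 0 <= nu -> CV_radius (c nu) = p_infty.
Proof.
intros H. apply CV_radius_infinite_DAlembert.
- intros n. apply Rgt_not_eq. apply c_pos; auto.
- apply is_lim_seq_le_le with (fun _ => 0) (fun n => / (INR n + 1)).
  + intros n. rewrite c_S by auto.
    assert (0 < c nu n) by (apply c_pos; auto).
    assert (0 <= INR n) by apply pos_INR.
    replace (c nu n / ((INR n + 1) * (INR n + nu + 1)) / c nu n) with (/ ((INR n + 1) * (INR n + nu + 1))) by (field; repeat split; lra).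
    rewrite Rabs_right.
    * split. left; apply Rinv_0_lt_compat; nra.
      apply Rinv_le_contravar; nra.
    * left; apply Rinv_0_lt_compat; nra.
  + apply is_lim_seq_const.
  + assert (HL : is_lim_seq (fun n => INR n + 1) p_infty).
    { apply is_lim_seq_ext with (fun n => INR (S n)). intros; apply S_INR.
      apply (is_lim_seq_incr_1 INR). apply is_lim_seq_INR. }
    replace (Finite 0) with (Rbar_inv p_infty) by reflexivity.
    apply is_lim_seq_inv; auto. discriminate.
Qed.

Definition SS (nu y : R) := PSeries (c nu) y.

Lemma S_ex nu y : 0 <= nu -> ex_series (fun k => c nu k * y ^ k).
Proof.
intros H. assert (E := CV_radius_inside (c nu) y ltac:(rewrite c_radius; simpl; auto)).
unfold ex_pseries in E. eapply ex_series_ext; [|exact E].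
intros n. simpl. rewrite pow_n_pow. unfold scal; simpl; unfold mult; simpl. ring.
Qed.

Lemma S_cont nu : 0 <= nu -> continuity (SS nu).
Proof. intros H y. apply PSeries_continuity. rewrite c_radius; simpl; auto. Qed.

Lemma Series_nonneg (a : nat -> R) : (forall n, 0 <= a n) -> ex_series a -> 0 <= Series a.
Proof.
intros Ha He. replace 0 with (Series (fun n => 0 * a n)).
apply Series_le; auto. intros n; split; [lra|]. rewrite Rmult_0_l; auto.
rewrite Series_scal_l; ring.
Qed.

Lemma S_pos nu y : 0 <= nu -> 0 <= y -> 0 < SS nu y.
Proof.
intros H Hy. unfold SS, PSeries. rewrite Series_incr_1 by (apply S_ex; auto).
assert (0 < c nu 0 * y ^ 0) by (simpl; rewrite Rmult_1_r; apply c_pos; auto).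
assert (0 <= Series (fun k => c nu (S k) * y ^ (S k))).
{ apply Series_nonneg.
  - intros n. apply Rmult_le_pos; [left; apply c_pos; auto | apply pow_le; auto].
  - apply (ex_series_incr_1 (fun k => c nu k * y ^ k)). apply S_ex; auto. }
lra.
Qed.


Lemma Bessel_SS mu x : 0 < x -> BesselI mu x = Rpower (x/2) mu * SS mu ((x/2)^2).
Proof.
intros Hx. unfold BesselI, SS, PSeries. rewrite <- Series_scal_l.
apply Series_ext. intros k. unfold c.
rewrite Rpower_plus. replace (2 * INR k) with (INR (2 * k)) by (rewrite mult_INR; simpl; ring).
rewrite Rpower_pow by lra. rewrite <- pow_mult. unfold Rdiv. ring.
Qed.

Lemma Psi_SS nu x : 0 < x -> Psi nu x = (x/2) * SS (nu+1) ((x/2)^2) / SS nu ((x/2)^2).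
Proof.
intros Hx. unfold Psi. rewrite !Bessel_SS by auto.
rewrite Rpower_plus, Rpower_1 by lra.
assert (0 < Rpower (x/2) nu) by apply exp_pos.
destruct (Req_dec (SS nu ((x/2)^2)) 0) as [E|E].
- rewrite E. unfold Rdiv. rewrite Rmult_0_r, Rinv_0. ring.
- field. split; lra.
Qed.

Lemma key nu t : 0 <= nu -> 0 < t -> t * SS (nu+1) (t^2) < SS nu (t^2).
Proof.
intros Hnu Ht. set (T := t^2).
assert (HT : 0 < T) by (unfold T; nra).
set (A := fun k => c nu k * T ^ k).
assert (HA : ex_series A) by (apply S_ex; auto).
assert (HA1 : ex_series (fun k => A (S k))) by (apply (ex_series_incr_1 A); auto).
set (B := fun k => (A k + A (S k)) * / 2).
assert (HB : ex_series B).
{ apply ex_series_scal_r. apply (ex_series_plus (V:=R_NormedModule)); auto. }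
assert (HSB : Series B = (SS nu T + Series (fun k => A (S k))) * / 2).
{ unfold B. rewrite Series_scal_r. f_equal. apply Series_plus; auto. }
assert (HS : SS nu T = A 0%nat + Series (fun k => A (S k))).
{ unfold SS, PSeries. apply Series_incr_1; auto. }
assert (HA0 : 0 < A 0%nat) by (unfold A; simpl; rewrite Rmult_1_r; apply c_pos; auto).
unfold SS at 1, PSeries. rewrite <- Series_scal_l.
apply Rle_lt_trans with (Series B).
- apply Series_le; auto. intros k. split.
  + apply Rmult_le_pos; [lra|]. apply Rmult_le_pos; [left; apply c_pos; lra| apply pow_le; lra].
  + unfold B, A. rewrite c_shift, c_S by auto. simpl (T ^ S k).
    assert (Hc : 0 < c nu k) by (apply c_pos; auto).
    assert (HP : 0 < T ^ k) by (apply pow_lt; auto).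
    set (q := c nu k * T ^ k).
    assert (Hq : 0 < q) by (unfold q; nra).
    assert (0 <= INR k) by apply pos_INR.
    set (a := INR k + 1). set (m := INR k + nu + 1).
    assert (Ha : 1 <= a) by (unfold a; lra).
    assert (Hm : a <= m) by (unfold a, m; lra).
    assert (E : (c nu k * T ^ k + c nu k / (a * m) * (T * T ^ k)) * / 2 - t * (c nu k / m * T ^ k)
       = q * ((t - a)^2 + a * (m - a)) / (2 * a * m)).
    { unfold q, T. field. split; lra. }
    assert (0 <= q * ((t - a)^2 + a * (m - a)) / (2 * a * m)).
    { assert (0 <= (t-a)^2) by apply pow2_ge_0. assert (0 <= a*(m-a)) by (apply Rmult_le_pos; lra).
      apply Rmult_le_pos; [apply Rmult_le_pos; lra | left; apply Rinv_0_lt_compat; nra]. }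
    unfold q in *. lra.
- rewrite HSB, HS. lra.
Qed.


Theorem mainTheorem3 (nu K : R) (hnu : 0 <= nu) (hK : nu + 1 < K) :
  exists r : R, 0 < r /\ r - Psi nu (2 * K * r) = 0.
Proof.
set (g := fun y => SS nu y - K * SS (nu+1) y).
assert (Hnu1 : 0 <= nu + 1) by lra.
assert (Hg : continuity g).
{ intros y. unfold g. apply continuity_pt_minus; [apply S_cont; auto|].
  apply continuity_pt_mult; [apply continuity_pt_const; intros a b; reflexivity| apply S_cont; auto]. }
assert (Hg0 : g 0 < 0).
{ unfold g, SS. rewrite !PSeries_0. rewrite c_shift by auto. simpl INR.
  assert (0 < c nu 0) by (apply c_pos; auto).
  replace (c nu 0 - K * (c nu 0 / (0 + nu + 1))) with (c nu 0 * ((nu + 1 - K) / (nu + 1))) by (field; lra).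
  assert ((nu + 1 - K) / (nu + 1) < 0).
  { unfold Rdiv. assert (0 < / (nu+1)) by (apply Rinv_0_lt_compat; lra). nra. }
  nra. }
assert (HK0 : 0 < K) by lra.
assert (HgK : 0 < g (K^2)).
{ unfold g. assert (H := key nu K hnu HK0). lra. }
destruct (IVT g 0 (K^2) Hg ltac:(nra) Hg0 HgK) as [z [[Hz1 Hz2] Hz]].
assert (Hzp : 0 < z).
{ destruct Hz1 as [H|H]; auto. subst z. lra. }
exists (sqrt z / K). split.
- apply Rdiv_lt_0_compat; auto. apply sqrt_lt_R0; auto.
- assert (Hsq : 0 < sqrt z) by (apply sqrt_lt_R0; auto).
  rewrite Psi_SS by (apply Rmult_lt_0_compat; [lra| apply Rdiv_lt_0_compat; lra]).
  replace (2 * K * (sqrt z / K) / 2) with (sqrt z) by (field; lra).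
  rewrite pow2_sqrt by lra.
  assert (HP := S_pos (nu+1) z Hnu1 ltac:(lra)).
  unfold g in Hz. replace (SS nu z) with (K * SS (nu+1) z) by lra.
  field. lra.
Qed.
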